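(* Let $\mathcal{F}$ be a flag of type $(ms_1,\dots,ms_r)$ on $\mathbb{F}_{q^n}$ with best friend $\mathbb{F}_{q^m}$, and let $\beta\in\mathbb{F}_{q^n}^\ast\setminus\mathbb{F}_{q^m}^\ast$. If $d_f(\mathrm{Orb}_\beta(\mathcal{F}))=2m$, then $\gcd(s_j,n/m)\neq 1$ for at least $r-1$ indices $j\in\{1,\dots,r\}$.
   Context: $q$ is a prime power and $\mathbb{F}_{q^n}$ is regarded as an $n$-dimensional $\mathbb{F}_q$-vector space; all subspaces are $\mathbb{F}_q$-subspaces. The subspace distance is $d_S(\mathcal{U},\mathcal{V})=\dim(\mathcal{U}+\mathcal{V})-\dim(\mathcal{U}\cap\mathcal{V})$. A flag $\mathcal{F}=(\mathcal{F}_1,\dots,\mathcal{F}_r)$ on $\mathbb{F}_{q^n}$ is a sequence of subspaces $\{0\}\subsetneq\mathcal{F}_1\subsetneq\cdots\subsetneq\mathcal{F}_r\subsetneq\mathbb{F}_{q^n}$; its type is $(\dim\mathcal{F}_1,\dots,\dim\mathcal{F}_r)$. The flag distance is $d_f(\mathcal{F},\mathcal{F}')=\sum_i d_S(\mathcal{F}_i,\mathcal{F}'_i)$; the minimum distance of a flag code is the minimum flag distance between distinct codewords ($0$ if the code has one element). For $\beta\in\mathbb{F}_{q^n}^\ast$, $\mathcal{F}\beta=(\mathcal{F}_1\beta,\dots,\mathcal{F}_r\beta)$ and $\mathrm{Orb}_\beta(\mathcal{F})=\{\mathcal{F}\beta^j: j\ge 0\}$. A subfield $\mathbb{F}_{q^m}$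 is a friend of a subspace $\mathcal{U}$ if $\mathcal{U}$ is an $\mathbb{F}_{q^m}$-vector space; the best friend is the largest friend. A friend of a flag is a common friend of all its subspaces; the best friend of a flag is its largest friend. *)

(* Defs.v *)
(* F = F_q (any finite field), L = F_{q^n} as a finite
   field extension of F; subspaces are F-subspaces {vspace L};
   subfields F_{q^m} of F_{q^n} are the F-subfields {subfield L}. *)
From HB Require Import structures.
From mathcomp Require Import all_boot all_order all_algebra all_field.
Set Implicit Arguments. Unset Strict Implicit. Unset Printing Implicit Defensive.
Import GRing.Theory.
Local Open Scope ring_scope.

Section FlagDefs.
Variables (F : finFieldType) (L : fieldExtType F).

Definition subspace_dist (U V : {vspace L}) : nat :=
  (\dim (U + V) - \dim (U :&: V))%N.

Definition is_flag (fl : seq {vspace L}) : bool :=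
  [&& all (fun U => U != 0%VS) fl, all (fun U => U != fullv) fl &
      sorted (fun U V => (U <= V)%VS && (U != V)) fl].

Definition flag_dist (fl fl' : seq {vspace L}) : nat :=
  \sum_(i < size fl) subspace_dist (nth 0%VS fl i) (nth 0%VS fl' i).

(* K is a friend of U : U is a K-vector space *)
Definition friend (K : {subfield L}) (U : {vspace L}) : bool :=
  (K * U <= U)%VS.

Definition flag_friend (K : {subfield L}) (fl : seq {vspace L}) : bool :=
  all (friend K) fl.

Definition flag_best_friend (K : {subfield L}) (fl : seq {vspace L}) : Prop :=
  flag_friend K fl /\ forall K' : {subfield L}, flag_friend K' fl -> (K' <= K)%VS.

Definition vmul (U : {vspace L}) (b : L) : {vspace L} := (U * <[b]>)%VS.
Definition flag_mul (fl : seq {vspace L}) (b : L) : seq {vspace L} :=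
  map (fun U => vmul U b) fl.

Definition orb_elt (fl : seq {vspace L}) (b : L) (j : nat) := flag_mul fl (b ^+ j).

Definition orbit_min_dist (fl : seq {vspace L}) (b : L) (d : nat) : Prop :=
  ((exists i j, orb_elt fl b i <> orb_elt fl b j /\
                flag_dist (orb_elt fl b i) (orb_elt fl b j) = d) /\
   (forall i j, orb_elt fl b i <> orb_elt fl b j ->
                (d <= flag_dist (orb_elt fl b i) (orb_elt fl b j))%N))
  \/ ((forall i j, orb_elt fl b i = orb_elt fl b j) /\ d = 0%N).

End FlagDefs.

(* Main.v *)
Require Import Defs.
From HB Require Import structures.
From mathcomp Require Import all_boot all_order all_algebra all_field.
From mathcomp Require Import zify.
Import GRing.Theory.
Local Open Scope ring_scope.

Lemma count_all_but_one (T : Type) (p : pred T) (x0 : T) (s : seq T) (i0 : nat) :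
  (forall k, (k < size s)%N -> k != i0 -> p (nth x0 s k)) -> (size s - 1 <= count p s)%N.
Proof.
elim: s i0 => [//|x s IH] [|i0] H /=.
  have : all p s.
    apply/(all_nthP x0) => k Hk; exact: (H k.+1).
  rewrite all_count => /eqP ->; rewrite subn1 /=; lia.
have px : p x by exact: (H 0%N).
have := IH i0 (fun k Hk Hne => H k.+1 Hk Hne).
rewrite px /=; lia.
Qed.

Section S.
Variables (F : finFieldType) (L : fieldExtType F).

Lemma dim_mul_line (U : {vspace L}) (c : L) : c != 0 -> \dim (U * <[c]>)%VS = \dim U.
Proof.
move=> c0; apply/eqP; rewrite eqn_leq; apply/andP; split.
  by apply: leq_trans (dim_prodv _ _) _; rewrite dim_vline c0 /= muln1.
have e : U = (U * <[c]> * <[c^-1]>)%VS by rewrite -prodvA prodv_line mulfV // prodv1.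
by rewrite {1}e; apply: leq_trans (dim_prodv _ _) _; rewrite dim_vline invr_eq0 c0 /= muln1.
Qed.

Lemma mul_line_eq (U : {vspace L}) (c : L) : c != 0 -> (U * <[c]> <= U)%VS -> (U * <[c]>)%VS = U.
Proof.
move=> c0 sub; apply/eqP; rewrite eqEdim sub /= dim_mul_line //.
Qed.

Lemma adjoin_module (K : {subfield L}) (U : {vspace L}) (g : L) :
  (K * U <= U)%VS -> (U * <[g]> <= U)%VS -> (<<K; g>> * U <= U)%VS.
Proof.
move=> KU gU.
have gi : forall i, (U * <[g ^+ i]> <= U)%VS.
  elim=> [|i IH]; first by rewrite expr0 prodv1.
  by rewrite exprSr -prodv_line prodvA (subv_trans (prodvSl _ IH)).
rewrite Fadjoin_eq_sum /Fadjoin_sum big_distrl /=; apply/subv_sumP => i _.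
rewrite -prodvA (prodvC <[g ^+ i]>%VS) (subv_trans _ KU) // prodvSr //.
Qed.
End S.

Lemma line_cancel (F : finFieldType) (L : fieldExtType F) (U1 U2 : {vspace L}) (a : L) :
  a != 0 -> (U1 * <[a]> = U2 * <[a]>)%VS -> U1 = U2.
Proof.
move=> a0 e.
have c : forall U : {vspace L}, U = (U * <[a]> * <[a^-1]>)%VS
  by move=> U; rewrite -prodvA prodv_line mulfV // prodv1.
by rewrite (c U1) (c U2) e.
Qed.

Theorem mainTheorem2 (F : finFieldType) (L : fieldExtType F)
    (fl : seq {vspace L}) (K : {subfield L}) (m : nat) (s : seq nat) (beta : L) :
  is_flag fl ->
  size s = size fl ->
  (forall j, (j < size fl)%N -> \dim (nth 0%VS fl j) = (m * nth 0%N s j)%N) ->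
  flag_best_friend K fl ->
  \dim K = m ->
  beta != 0 -> beta \notin K ->
  orbit_min_dist fl beta (2 * m) ->
  (size fl - 1 <= count (fun sj => gcdn sj (\dim (fullv : {vspace L}) %/ m) != 1%N) s)%N.
Proof.
move=> Hfl Hsz Hdim [Hfr _] HdK b0 _ Hmin.
have m0 : (0 < m)%N by rewrite -HdK adim_gt0.
case: Hmin => [[[i [j [Hne Hd]]] _] | [_ Hm0]]; last by lia.
have a0 : beta ^+ i != 0 by rewrite expf_neq0.
have bb0 : beta ^+ j != 0 by rewrite expf_neq0.
set a := beta ^+ i in a0 Hne Hd *.
set b := beta ^+ j in bb0 Hne Hd *.
set g := b / a.
have g0 : g != 0 by rewrite mulf_neq0 ?invr_eq0.
have HU : forall k, (k < size fl)%N -> (K * nth 0%VS fl k <= nth 0%VS fl k)%VS.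
  by move=> k Hk; exact: (all_nthP 0%VS Hfr k Hk).
have Hmod : forall U c, (K * U <= U)%VS -> (K * (U * <[c]>) <= U * <[c]>)%VS.
  by move=> U c H; rewrite prodvA prodvSl.
have Hba : forall U, (U * <[b]> = U * <[g]> * <[a]>)%VS.
  by move=> U; rewrite -prodvA prodv_line /g divfK.
pose d k := subspace_dist (vmul (nth 0%VS fl k) a) (vmul (nth 0%VS fl k) b).
have A : forall k, (k < size fl)%N ->
    (d k = 0%N /\ (nth 0%VS fl k * <[g]> = nth 0%VS fl k)%VS) \/ (2 * m <= d k)%N.
  move=> k Hk; rewrite /d /subspace_dist /vmul.
  set U := nth 0%VS fl k; set V := (U * <[a]>)%VS; set W := (U * <[b]>)%VS.
  have dV : \dim V = \dim U by rewrite dim_mul_line.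
  have dW : \dim W = \dim U by rewrite dim_mul_line.
  have hsc := dimv_sum_cap V W.
  have hcap : (\dim (V :&: W) <= \dim V)%N := dimvS (capvSl _ _).
  have mVW : (m %| \dim (V :&: W))%N.
    rewrite -HdK; apply: field_module_dimS; rewrite subv_cap.
    rewrite (subv_trans (prodvSr _ (capvSl V W))) ?Hmod ?HU //=.
    by rewrite (subv_trans (prodvSr _ (capvSr V W))) ?Hmod ?HU.
  have mU : (m %| \dim U)%N by rewrite -HdK; apply: field_module_dimS; apply: HU.
  case: (eqVneq (\dim (V :&: W)) (\dim U)) => e.
    left; split; first by move: hsc; rewrite dV dW e; set x := \dim (V + W); set u := \dim U; lia.
    have eV : (V :&: W)%VS = V by apply/eqP; rewrite eqEdim capvSl dV -e leqnn.
    have eW : (V :&: W)%VS = W by apply/eqP; rewrite eqEdim capvSr dW -e leqnn.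
    have VW : V = W by rewrite -[LHS]eV eW.
    apply: (@line_cancel F L _ _ a a0); rewrite -Hba; by move: VW; rewrite /V /W => ->.
  right; case/dvdnP: mVW => y ey; case/dvdnP: mU => x ex.
  have yx : (y < x)%N.
    rewrite -(ltn_pmul2r m0) -ey -ex ltn_neqAle e -dV hcap; done.
  move: hsc (leq_mul yx (leqnn m)); rewrite dV dW ey ex mulSn; set z := \dim (V + W); lia.
have Hsum : (\sum_(k < size fl) d k)%N = (2 * m)%N.
  rewrite -Hd /flag_dist /orb_elt /flag_mul size_map; apply: eq_bigr => k _.
  by rewrite !(nth_map 0%VS).
have [i0 Hi0] : exists i0, forall k, (k < size fl)%N -> k != i0 -> d k = 0%N.
  case: (pickP (fun k : 'I_(size fl) => d k != 0%N)) => [k0 Hk0 | H0].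
    exists (val k0) => k Hk Hne'; apply/eqP/negPn/negP => Hdk.
    have nk : Ordinal Hk != k0 by apply: contra Hne' => /eqP <-.
    move: Hsum; rewrite (bigD1 k0) //= (bigD1 (Ordinal Hk)) //=.
    have := A k0 (ltn_ord k0); have := A k Hk.
    move: Hk0 Hdk => /eqP Hk0 /eqP Hdk /=; lia.
  exists 0%N => k Hk _; have := H0 (Ordinal Hk); by move/negbFE/eqP.
have gK : g \notin K.
  apply/negP => gK; apply: Hne; apply/eq_in_map => U /(allP Hfr) KU /=.
  rewrite /vmul Hba (@mul_line_eq F L U g g0) //.
  rewrite prodvC; apply: (subv_trans _ KU); apply: prodvSl; by rewrite -memvE.
set t := adjoin_degree K g.
have t1 : t != 1%N by rewrite /t adjoin_deg_eq1.
have dE : \dim <<K; g>>%AS = (t * m)%N by rewrite /= dim_Fadjoin HdK.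
have En : (\dim <<K; g>>%AS %| \dim (fullv : {vspace L}))%N.
  by apply: field_module_dimS; apply: subvf.
rewrite -Hsz; apply: (@count_all_but_one _ _ 0%N _ i0); rewrite Hsz => k Hk Hne'.
have [[_ Hg] | Hdk] := A k Hk; last by have := Hi0 k Hk Hne'; lia.
have EU : (<<K; g>>%AS * nth 0%VS fl k <= nth 0%VS fl k)%VS.
  by apply: adjoin_module; [apply: HU | rewrite Hg].
have := field_module_dimS EU; rewrite dE Hdim // mulnC dvdn_pmul2l // => ts.
move: En; rewrite dE -dvdn_divRL; last by rewrite -HdK; apply: field_module_dimS; apply: subvf. 
move=> tn; apply/eqP => g1.
have : (t %| gcdn (nth 0%N s k) (\dim (fullv : {vspace L}) %/ m))%N by rewrite dvdn_gcd ts tn.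
by rewrite g1 dvdn1 (negbTE t1).
Qed.
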